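(* Let $H$ be a Hopf algebra, $S$ an $H$-comodule algebra and $M$ an $(H,S)$-Hopf module such that Condition $(\mathcal{F}_n)$ holds for $0\le n\le 2$, and endow $\mathrm{End}_S(M)$ with the $H$-comodule algebra structure $\Delta_{\mathrm{End}_S(M)}=\omega_1^{-1}\circ b^0$. Then the maps $\omega_0,\omega_1,\omega_2$ (restricted to unit groups) form an isomorphism of pre-cosimplicial groups $\mathcal{C}^\times_{\le2}(H,\mathrm{End}_S(M))\cong\mathcal{W}^\times_{\le2}(H,M)$; i.e. $\omega_j d^i=b^i\omega_{j-1}$ for $1\le j\le2$, $0\le i\le j$.
   Context: $M$ is a right $S$-module with $H$-coaction $\Delta_M$, $\Delta_M(ms)=\Delta_M(m)\Delta_S(s)$. $\mathrm{W}^n_S(M)=\mathrm{Hom}_S(M,M\otimes H^{\otimes n})$, algebra under $\circ\!\!\cdot$ (composition for $n=0$; for $n>0$, if $\varphi'(m)=\sum m'\otimes a$, $\varphi(m')=\sum m''\otimes b$ then $(\varphi\circ\!\!\cdot\varphi')(m)=\sum m''\otimes ba$). Cofaces: $b^0\varphi=(\mathrm{id}_M\otimes\mu_H)(\Delta_M\otimes\mathrm{id}_H)(\varphi\otimes\sigma_H)\Delta_M$, $b^1\varphi=\varphi\otimes\eta_H$; $b^0\Phi=(\mathrm{id}_M\otimes\mu_H\otimes\mathrm{id}_H)(\Delta_M\otimes T)(\Phi\otimes\sigma_H)\Delta_M$ ($T$ flip of $H\otimes H$), $b^1\Phi=(\mathrm{id}_M\otimes\Delta_H)\Phi$, $b^2\Phi=\Phi\otimes\eta_H$.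 $\mathcal{W}^\times_{\le2}(H,M)$ is the pre-cosimplicial group of $\circ\!\!\cdot$-units $\mathrm{W}^0_S(M)^\times\rightrightarrows\mathrm{W}^1_S(M)^\times\to\mathrm{W}^2_S(M)^\times$ with these cofaces. $\omega_n(f\otimes\underline h)(m)=f(m)\otimes\underline h$; Condition $(\mathcal{F}_n)$: $\omega_n$ bijective. For an $H$-comodule algebra $E$, $\mathcal{C}^\times_{\le2}(H,E)$ is $E^\times\rightrightarrows(E\otimes H)^\times\to(E\otimes H\otimes H)^\times$ with $d^0(x)=\Delta_E(x)$, $d^1(x)=x\otimes1$, $d^0(X)=(\Delta_E\otimes\mathrm{id})(X)$, $d^1(X)=(\mathrm{id}\otimes\Delta_H)(X)$, $d^2(X)=X\otimes1$. *)

(* Defs.v *)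
(* Hopf-algebraic setting of Prop. 2.5, with tensor products
   over the commutative ring k given abstractly by their universal property. *)
From HB Require Import structures.
From mathcomp Require Import all_boot all_algebra.
From Stdlib Require Import ClassicalEpsilon.
Set Implicit Arguments. Unset Strict Implicit. Unset Printing Implicit Defensive.
Import GRing.Theory.
Local Open Scope ring_scope.

Section HopfDefs.
Variable k : comNzRingType.

Definition klinear (U V : lmodType k) (f : U -> V) : Prop :=
  forall (a : k) (u v : U), f (a *: u + v) = a *: f u + f v.

Definition kbilinear (U V W : lmodType k) (f : U -> V -> W) : Prop :=
  (forall v, klinear (fun u => f u v)) /\ (forall u, klinear (f u)).

Definition is_tensor (U V T : lmodType k) (t : U -> V -> T) : Prop :=
  kbilinear t /\
  forall (W : lmodType k) (f : U -> V -> W), kbilinear f ->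
    exists! g : T -> W, klinear g /\ forall u v, g (t u v) = f u v.

Definition tlift (U V T W : lmodType k) (t : U -> V -> T) (f : U -> V -> W)
  : T -> W :=
  epsilon (inhabits (fun _ : T => (0 : W)))
          (fun g => klinear g /\ forall u v, g (t u v) = f u v).

(* product on a tensor product of two algebras: (a(x)b)(c(x)d) = ac (x) bd *)
Definition tmul (A B AB : lmodType k) (t : A -> B -> AB)
  (mulA : A -> A -> A) (mulB : B -> B -> B) (x y : AB) : AB :=
  tlift t (fun a b => tlift t (fun c d => t (mulA a c) (mulB b d)) y) x.

Definition is_hopf (H : algType k) (HH HHH : lmodType k)
  (tHH : H -> H -> HH) (tHHH : H -> HH -> HHH)
  (D : H -> HH) (eps : H -> k) (sig : H -> H) : Prop :=
  (is_tensor tHH) /\ (is_tensor tHHH) /\ (klinear D) /\ (klinear sig) /\ ((forall (a : k) x y, eps (a *: x + y) = a * eps x + eps y)) /\ ((forall h, tlift tHH (fun a b => tlift tHH (fun c d => tHHH c (tHH d b)) (D a)) (D h)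
                 = tlift tHH (fun a b => tHHH a (D b)) (D h))) /\ ((forall h, tlift tHH (fun a b => eps a *: b) (D h) = h
              /\ tlift tHH (fun a b => eps b *: a) (D h) = h)) /\ ((forall x y, D (x * y) = tmul tHH *%R *%R (D x) (D y)) /\ D 1 = tHH 1 1) /\ ((forall x y, eps (x * y) = eps x * eps y) /\ eps 1 = 1) /\ (forall h, tlift tHH (fun a b => sig a * b) (D h) = eps h *: 1
             /\ tlift tHH (fun a b => a * sig b) (D h) = eps h *: 1).

Definition is_comodule_algebra (H : algType k) (HH : lmodType k)
  (tHH : H -> H -> HH) (D : H -> HH) (eps : H -> k)
  (S : algType k) (SH SHH : lmodType k) (tSH : S -> H -> SH) (tSHH : S -> HH -> SHH)
  (DS : S -> SH) : Prop :=
  (is_tensor tSH) /\ (is_tensor tSHH) /\ (klinear DS) /\ ((forall x, tlift tSH (fun s h => tlift tSH (fun s' g => tSHH s' (tHH g h)) (DS s)) (DS x)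
                 = tlift tSH (fun s h => tSHH s (D h)) (DS x))) /\ ((forall x, tlift tSH (fun s h => eps h *: s) (DS x) = x)) /\ ((forall x y, DS (x * y) = tmul tSH *%R *%R (DS x) (DS y))) /\ (DS 1 = tSH 1 1).

Definition is_right_module (S : algType k) (M : lmodType k) (act : M -> S -> M) : Prop :=
  (kbilinear act) /\ ((forall m s t, act (act m s) t = act m (s * t))) /\ (forall m, act m 1 = m).

Definition is_hopf_module (H : algType k) (HH : lmodType k)
  (tHH : H -> H -> HH) (D : H -> HH) (eps : H -> k)
  (S : algType k) (SH : lmodType k) (tSH : S -> H -> SH) (DS : S -> SH)
  (M : lmodType k) (act : M -> S -> M) (MH MHH : lmodType k)
  (tMH : M -> H -> MH) (tMHH : M -> HH -> MHH) (DM : M -> MH) : Prop :=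
  (is_right_module act) /\ (is_tensor tMH) /\ (is_tensor tMHH) /\ (klinear DM) /\ ((forall x, tlift tMH (fun m h => tlift tMH (fun n g => tMHH n (tHH g h)) (DM m)) (DM x)
                 = tlift tMH (fun m h => tMHH m (D h)) (DM x))) /\ ((forall x, tlift tMH (fun m h => eps h *: m) (DM x) = x)) /\ (forall m s, DM (act m s)
        = tlift tMH (fun n h => tlift tSH (fun s' g => tMH (act n s') (h * g)) (DS s)) (DM m)).

Definition tact (S : algType k) (M X MX : lmodType k) (act : M -> S -> M)
  (t : M -> X -> MX) (y : MX) (s : S) : MX :=
  tlift t (fun m x => t (act m s) x) y.

Definition Slinear (S : algType k) (M T : lmodType k) (act : M -> S -> M)
  (actT : T -> S -> T) (phi : M -> T) : Prop :=
  klinear phi /\ forall m s, phi (act m s) = actT (phi m) s.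

(* iota : E -> (M -> M) identifies E with End_S(M) as a k-module *)
Definition is_EndS (S : algType k) (M : lmodType k) (act : M -> S -> M)
  (E : lmodType k) (iota : E -> M -> M) : Prop :=
  ((forall (a : k) e e' m, iota (a *: e + e') m = a *: iota e m + iota e' m)) /\ ((forall e, Slinear act act (iota e))) /\ ((forall e e', (forall m, iota e m = iota e' m) -> e = e')) /\ (forall phi, Slinear act act phi -> exists e, forall m, iota e m = phi m).

Definition mulE (M E : lmodType k) (iota : E -> M -> M) (e e' : E) : E :=
  epsilon (inhabits 0) (fun x => forall m, iota x m = iota e (iota e' m)).
Definition oneE (M E : lmodType k) (iota : E -> M -> M) : E :=
  epsilon (inhabits 0) (fun x => forall m, iota x m = m).

Definition omega (M E X EX MX : lmodType k) (iota : E -> M -> M)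
  (tEX : E -> X -> EX) (tMX : M -> X -> MX) (y : EX) (m : M) : MX :=
  tlift tEX (fun e x => tMX (iota e m) x) y.

Definition condF (S : algType k) (M : lmodType k) (act : M -> S -> M)
  (E X EX MX : lmodType k) (iota : E -> M -> M)
  (tEX : E -> X -> EX) (tMX : M -> X -> MX) : Prop :=
  (forall x y, (forall m, omega iota tEX tMX x m = omega iota tEX tMX y m) -> x = y) /\
  (forall phi, Slinear act (tact act tMX) phi ->
     exists x, forall m, omega iota tEX tMX x m = phi m).

Definition b0_0 (H : algType k) (M MH : lmodType k) (tMH : M -> H -> MH)
  (DM : M -> MH) (sig : H -> H) (phi : M -> M) (m : M) : MH :=
  tlift tMH (fun m0 m1 => tlift tMH (fun n g => tMH n (g * sig m1)) (DM (phi m0))) (DM m).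
Definition b1_0 (H : algType k) (M MH : lmodType k) (tMH : M -> H -> MH)
  (phi : M -> M) (m : M) : MH := tMH (phi m) 1.
Definition b0_1 (H : algType k) (HH M MH MHH : lmodType k) (tHH : H -> H -> HH)
  (tMH : M -> H -> MH) (tMHH : M -> HH -> MHH) (DM : M -> MH) (sig : H -> H)
  (Phi : M -> MH) (m : M) : MHH :=
  tlift tMH (fun m0 m1 =>
    tlift tMH (fun m' h => tlift tMH (fun n g => tMHH n (tHH (g * sig m1) h)) (DM m'))
      (Phi m0)) (DM m).
Definition b1_1 (H : algType k) (HH M MH MHH : lmodType k)
  (tMH : M -> H -> MH) (tMHH : M -> HH -> MHH) (D : H -> HH)
  (Phi : M -> MH) (m : M) : MHH := tlift tMH (fun n h => tMHH n (D h)) (Phi m).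
Definition b2_1 (H : algType k) (HH M MH MHH : lmodType k) (tHH : H -> H -> HH)
  (tMH : M -> H -> MH) (tMHH : M -> HH -> MHH)
  (Phi : M -> MH) (m : M) : MHH := tlift tMH (fun n h => tMHH n (tHH h 1)) (Phi m).

Definition wmul (X M MX : lmodType k) (tMX : M -> X -> MX) (mulX : X -> X -> X)
  (phi phi' : M -> MX) (m : M) : MX :=
  tlift tMX (fun m' a => tlift tMX (fun m'' b => tMX m'' (mulX b a)) (phi m')) (phi' m).

Definition is_unit (A : Type) (mul : A -> A -> A) (one : A) (x : A) : Prop :=
  exists y, mul x y = one /\ mul y x = one.

Definition is_unitW (M T : Type) (inW : (M -> T) -> Prop)
  (mulW : (M -> T) -> (M -> T) -> M -> T) (oneW : M -> T) (phi : M -> T) : Prop :=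
  inW phi /\ exists psi, inW psi /\ (forall m, mulW phi psi m = oneW m)
                                  /\ (forall m, mulW psi phi m = oneW m).

Definition unit_group_iso (A M T : Type) (mulA : A -> A -> A) (oneA : A)
  (inW : (M -> T) -> Prop) (mulW : (M -> T) -> (M -> T) -> M -> T) (oneW : M -> T)
  (om : A -> M -> T) : Prop :=
  ((forall x, is_unit mulA oneA x -> is_unitW inW mulW oneW (om x))) /\ ((forall x y, is_unit mulA oneA x -> is_unit mulA oneA y ->
         forall m, om (mulA x y) m = mulW (om x) (om y) m)) /\ ((forall x y, is_unit mulA oneA x -> is_unit mulA oneA y ->
         (forall m, om x m = om y m) -> x = y)) /\ ((forall phi, is_unitW inW mulW oneW phi ->
         exists x, is_unit mulA oneA x /\ forall m, om x m = phi m)).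

Definition DeltaE (H : algType k) (M E MH EH : lmodType k) (iota : E -> M -> M)
  (tEH : E -> H -> EH) (tMH : M -> H -> MH) (DM : M -> MH) (sig : H -> H) (e : E) : EH :=
  epsilon (inhabits 0)
    (fun x => forall m, omega iota tEH tMH x m = b0_0 tMH DM sig (iota e) m).

Definition d1_0 (H : algType k) (E EH : lmodType k) (tEH : E -> H -> EH) (e : E) : EH :=
  tEH e 1.
Definition d0_1 (H : algType k) (HH E EH EHH : lmodType k) (tHH : H -> H -> HH)
  (tEH : E -> H -> EH) (tEHH : E -> HH -> EHH) (DE : E -> EH) (X : EH) : EHH :=
  tlift tEH (fun e h => tlift tEH (fun e0 e1 => tEHH e0 (tHH e1 h)) (DE e)) X.
Definition d1_1 (H : algType k) (HH E EH EHH : lmodType k)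
  (tEH : E -> H -> EH) (tEHH : E -> HH -> EHH) (D : H -> HH) (X : EH) : EHH :=
  tlift tEH (fun e h => tEHH e (D h)) X.
Definition d2_1 (H : algType k) (HH E EH EHH : lmodType k) (tHH : H -> H -> HH)
  (tEH : E -> H -> EH) (tEHH : E -> HH -> EHH) (X : EH) : EHH :=
  tlift tEH (fun e h => tEHH e (tHH h 1)) X.

End HopfDefs.

(* Main.v *)
Require Import Defs.
From HB Require Import structures.
From mathcomp Require Import all_boot all_algebra.
From Stdlib Require Import ClassicalEpsilon FunctionalExtensionality.
Set Implicit Arguments. Unset Strict Implicit. Unset Printing Implicit Defensive.
Import GRing.Theory.
Local Open Scope ring_scope.

Section Gen.
Variable k : comNzRingType.

Lemma klin0 (U V : lmodType k) (f : U -> V) : klinear f -> f 0 = 0.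
Proof.
move=> Hf; have h := Hf 1 0 0; rewrite scale1r addr0 in h.
apply: (addrI (f 0)); rewrite addr0; rewrite scale1r in h; by rewrite -h.
Qed.

Lemma klinZ (U V : lmodType k) (f : U -> V) a u : klinear f -> f (a *: u) = a *: f u.
Proof. by move=> Hf; have h := Hf a u 0; rewrite addr0 (klin0 Hf) addr0 in h. Qed.

Lemma klinD (U V : lmodType k) (f : U -> V) u v : klinear f -> f (u + v) = f u + f v.
Proof. by move=> Hf; have := Hf 1 u v; rewrite !scale1r. Qed.

Lemma klin_id (U : lmodType k) : klinear (fun u : U => u).
Proof. by []. Qed.

Lemma klin_comp (U V W : lmodType k) (L : V -> W) (E : U -> V) :
  klinear L -> klinear E -> klinear (fun u => L (E u)).
Proof. by move=> HL HE a u v; rewrite HE HL. Qed.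

Lemma klin_bil1 (U V X W : lmodType k) (f : V -> X -> W) (E : U -> V) c :
  kbilinear f -> klinear E -> klinear (fun u => f (E u) c).
Proof. by move=> [Hf _] HE a u v; rewrite HE Hf. Qed.

Lemma klin_of_bil2 (V X W : lmodType k) (f : V -> X -> W) c :
  kbilinear f -> klinear (f c).
Proof. by move=> [_ Hf]. Qed.

Lemma klin_add (U W : lmodType k) (A B : U -> W) :
  klinear A -> klinear B -> klinear (fun u => A u + B u).
Proof.
move=> HA HB a u v; rewrite HA HB scalerDr.
by rewrite -!addrA; congr (_ + _); rewrite addrCA.
Qed.

Lemma klin_scale (W : lmodType k) (c : k) : klinear (fun w : W => c *: w).
Proof. by move=> a u v; rewrite scalerDr !scalerA mulrC. Qed.

Lemma klin_eps (U W : lmodType k) (V : lmodType k) (eps : V -> k) (E : U -> V) (c : W) :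
  (forall (a : k) x y, eps (a *: x + y) = a * eps x + eps y) -> klinear E ->
  klinear (fun u => eps (E u) *: c).
Proof. by move=> He HE a u v; rewrite HE He scalerDl scalerA. Qed.

Lemma mul_bil (A : algType k) : kbilinear (@GRing.mul A).
Proof.
split=> [v|u] a x y /=; first by rewrite mulrDl scalerAl.
by rewrite mulrDr scalerAr.
Qed.

Lemma tensor_bil (U V T : lmodType k) (t : U -> V -> T) : is_tensor t -> kbilinear t.
Proof. by case. Qed.

Lemma tlift_spec (U V T W : lmodType k) (t : U -> V -> T) (f : U -> V -> W) :
  is_tensor t -> kbilinear f ->
  klinear (tlift t f) /\ forall u v, tlift t f (t u v) = f u v.
Proof.
move=> [_ Ht] Hf; rewrite /tlift; apply epsilon_spec.
by case: (Ht W f Hf) => g [Hg _]; exists g.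
Qed.

Lemma tlift_lin (U V T W : lmodType k) (t : U -> V -> T) (f : U -> V -> W) :
  is_tensor t -> kbilinear f -> klinear (tlift t f).
Proof. by move=> Ht Hf; case: (tlift_spec Ht Hf). Qed.

Lemma tlift_t (U V T W : lmodType k) (t : U -> V -> T) (f : U -> V -> W) u v :
  is_tensor t -> kbilinear f -> tlift t f (t u v) = f u v.
Proof. by move=> Ht Hf; case: (tlift_spec Ht Hf) => _ ->. Qed.

Lemma tlift_uniq (U V T W : lmodType k) (t : U -> V -> T) (f : U -> V -> W) (g : T -> W) :
  is_tensor t -> kbilinear f -> klinear g -> (forall u v, g (t u v) = f u v) ->
  forall y, g y = tlift t f y.
Proof.
move=> Ht Hf Hg Hgt y.
have [Hl Hl2] := tlift_spec Ht Hf.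
case: Ht => _ Ht; case: (Ht W f Hf) => g0 [_ Hu].
by rewrite -(Hu g (conj Hg Hgt)) -(Hu _ (conj Hl Hl2)).
Qed.

Lemma lin_ext (U V T W : lmodType k) (t : U -> V -> T) (g1 g2 : T -> W) :
  is_tensor t -> klinear g1 -> klinear g2 -> (forall u v, g1 (t u v) = g2 (t u v)) ->
  forall y, g1 y = g2 y.
Proof.
move=> Ht H1 H2 He y.
have Hb : kbilinear (fun u v => g1 (t u v)).
  case: (tensor_bil Ht) => Ha Hb; split=> [v|u] a x z /=; first by rewrite Ha H1.
  by rewrite Hb H1.
by rewrite (tlift_uniq Ht Hb H1 (fun _ _ => erefl)) (tlift_uniq Ht Hb H2).
Qed.

Lemma tlift_ext (U V T W : lmodType k) (t : U -> V -> T) (f g : U -> V -> W) y :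
  (forall u v, f u v = g u v) -> tlift t f y = tlift t g y.
Proof.
move=> H; have -> : f = g by apply: functional_extensionality => u; apply: functional_extensionality.
by [].
Qed.

Lemma tlift_comp (U V T W W' : lmodType k) (t : U -> V -> T) (f : U -> V -> W) (L : W -> W') y :
  is_tensor t -> kbilinear f -> klinear L ->
  L (tlift t f y) = tlift t (fun u v => L (f u v)) y.
Proof.
move=> Ht Hf HL.
have Hb : kbilinear (fun u v => L (f u v)).
  case: Hf => Ha Hb; split=> [v|u] a x z /=; first by rewrite Ha HL.
  by rewrite Hb HL.
apply: (tlift_uniq (g := fun y => L (tlift t f y)) Ht Hb).
  by apply: klin_comp => //; apply: tlift_lin.
by move=> u v; rewrite tlift_t.
Qed.

Lemma tlift_linfun (U V T W : lmodType k) (t : U -> V -> T) (f g : U -> V -> W) (a : k) y :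
  is_tensor t -> kbilinear f -> kbilinear g ->
  tlift t (fun u v => a *: f u v + g u v) y = a *: tlift t f y + tlift t g y.
Proof.
move=> Ht Hf Hg.
have Hb : kbilinear (fun u v => a *: f u v + g u v).
  case: Hf => Ha Hb; case: Hg => Hc Hd.
  split=> [v|u]; apply: klin_add; try apply: klin_comp; try apply: klin_scale; by [].
symmetry; apply: (tlift_uniq (g := fun y => a *: tlift t f y + tlift t g y) Ht Hb).
  apply: klin_add; last exact: tlift_lin.
  apply: klin_comp; [exact: klin_scale | exact: tlift_lin].
by move=> u v; rewrite !tlift_t.
Qed.

Lemma klin_tlift_fun (U V X T W : lmodType k) (t : V -> X -> T) (F : U -> V -> X -> W) y :
  is_tensor t -> (forall u, kbilinear (F u)) -> (forall p q, klinear (fun u => F u p q)) ->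
  klinear (fun u => tlift t (F u) y).
Proof.
move=> Ht Hb Hl a u v.
rewrite -tlift_linfun //; apply: tlift_ext => p q; exact: Hl.
Qed.


Lemma tlift_fubini (A B T A' B' T' W : lmodType k) (t : A -> B -> T) (t' : A' -> B' -> T')
  (F : A -> B -> A' -> B' -> W) y y' :
  is_tensor t -> is_tensor t' -> (forall a b, kbilinear (F a b)) ->
  (forall c d, kbilinear (fun a b => F a b c d)) ->
  tlift t (fun a b => tlift t' (F a b) y') y = tlift t' (fun c d => tlift t (fun a b => F a b c d) y) y'.
Proof.
move=> Ht Ht' H1 H2.
have Hb2 : kbilinear (fun c d => tlift t (fun a b => F a b c d) y).
  split=> [d|c]; apply: klin_tlift_fun => // a b; by case: (H1 a b).
have Hb1 : forall y', kbilinear (fun a b => tlift t' (F a b) y').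
  move=> z; split=> [b|a]; apply: klin_tlift_fun => // c d; by case: (H2 c d).
move: y'; apply: (lin_ext (g1 := fun y' => tlift t (fun a b => tlift t' (F a b) y') y)
   (g2 := fun y' => tlift t' (fun c d => tlift t (fun a b => F a b c d) y) y') Ht').
- apply: klin_tlift_fun => // a b; exact: tlift_lin.
- exact: tlift_lin.
move=> c d; rewrite tlift_t //; apply: tlift_ext => a b; exact: tlift_t.
Qed.

End Gen.

Ltac bil :=
  first [ match goal with Hh : _ |- _ => solve [apply Hh] end
        | apply: mul_bil
        | match goal with |- kbilinear (fun _ _ => _) =>
            split; intros; cbv beta; lin end ]
with linL :=
  first [ assumption
        | apply: klin_scale
        | match goal with
          | |- klinear (tlift ?t ?f) => apply: tlift_lin; [assumption | bil]
          | |- klinear (?f ?c) => apply: klin_of_bil2; bil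
          end ]
with lin :=
  cbv beta;
  first [ match goal with Hh : _ |- _ => solve [apply Hh] end |
  match goal with
  | |- klinear (fun u => u) => apply: klin_id
  | |- klinear (fun u => tlift ?t (@?F u) ?y) =>
      apply: (klin_tlift_fun (F:=F)); [assumption | intro; bil | intros; lin]
  | |- klinear (fun u => ?A (@?E u) *: ?c) => apply: (klin_eps (eps:=A) (E:=E)); [assumption | lin]
  | |- klinear (fun u => @?A u + @?B u) => apply: (klin_add (A:=A) (B:=B)); lin
  | |- klinear (fun u => ?L (@?E u)) => apply: (klin_comp (L:=L) (E:=E)); [linL | lin]
  | |- klinear (fun u => ?f (@?E u) ?c) => apply: (klin_bil1 (f:=f) (E:=E)); [bil | lin]
  end ].

Section T.
Variable k : comNzRingType.
Lemma tmul_bil (A B AB : lmodType k) (t : A -> B -> AB) mulA mulB :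
  is_tensor t -> kbilinear mulA -> kbilinear mulB -> kbilinear (tmul t mulA mulB).
Proof.
move=> Ht HA HB; have Htb := tensor_bil Ht.
rewrite /tmul; bil.
Qed.
End T.


Ltac sd := try (solve [intros; first [assumption | bil | linL | lin]]).

Section Hopf.
Variable k : comNzRingType.
Variables (H : algType k) (HH HHH : lmodType k)
  (tHH : H -> H -> HH) (tHHH : H -> HH -> HHH)
  (D : H -> HH) (eps : H -> k) (sig : H -> H).
Hypothesis Hhopf : is_hopf tHH tHHH D eps sig.

Let HtHH : is_tensor tHH. Proof. by case: Hhopf. Qed.
Let HtHHH : is_tensor tHHH. Proof. by case: Hhopf => _ []. Qed.
Let HtHHb : kbilinear tHH. Proof. exact: tensor_bil. Qed.
Let HtHHHb : kbilinear tHHH. Proof. exact: tensor_bil. Qed.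
Let HD : klinear D. Proof. by case: Hhopf => _ [_ []]. Qed.
Let Hsig : klinear sig. Proof. by case: Hhopf => _ [_ [_ []]]. Qed.
Let Heps : forall (a : k) x y, eps (a *: x + y) = a * eps x + eps y.
Proof. by case: Hhopf => _ [_ [_ [_ []]]]. Qed.
Let Hcoass : forall h, tlift tHH (fun a b => tlift tHH (fun c d => tHHH c (tHH d b)) (D a)) (D h)
                 = tlift tHH (fun a b => tHHH a (D b)) (D h).
Proof. by case: Hhopf => _ [_ [_ [_ [_ []]]]]. Qed.
Let Hcounit : forall h, tlift tHH (fun a b => eps a *: b) (D h) = h
              /\ tlift tHH (fun a b => eps b *: a) (D h) = h.
Proof. by case: Hhopf => _ [_ [_ [_ [_ [_ []]]]]]. Qed.
Let HDmul : forall x y, D (x * y) = tmul tHH *%R *%R (D x) (D y).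
Proof. by case: Hhopf => _ [_ [_ [_ [_ [_ [_ [[]]]]]]]]. Qed.
Let HepsM : forall x y, eps (x * y) = eps x * eps y.
Proof. by case: Hhopf => _ [_ [_ [_ [_ [_ [_ [_ [[]]]]]]]]]. Qed.
Let Hanti : forall h, tlift tHH (fun a b => sig a * b) (D h) = eps h *: 1
             /\ tlift tHH (fun a b => a * sig b) (D h) = eps h *: 1.
Proof. by case: Hhopf => _ [_ [_ [_ [_ [_ [_ [_ [_ ]]]]]]]]. Qed.

Lemma coassH_gen (W : lmodType k) (f : H -> H -> H -> W) :
  (forall b c, klinear (fun a => f a b c)) -> (forall a c, klinear (fun b => f a b c)) ->
  (forall a b, klinear (f a b)) -> forall h,
  tlift tHH (fun a b => tlift tHH (fun c d => f c d b) (D a)) (D h)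
  = tlift tHH (fun a b => tlift tHH (fun c d => f a c d) (D b)) (D h).
Proof.
move=> H1 H2 H3 h.
pose Phi := tlift tHHH (fun a bc => tlift tHH (fun b c => f a b c) bc).
have HPhi : klinear Phi by rewrite /Phi; linL.
have := congr1 Phi (Hcoass h).
rewrite !(tlift_comp (L:=Phi)); sd.
move=> E; apply: etrans (etrans _ E) _.
  apply: tlift_ext => a b; rewrite (tlift_comp (L:=Phi)); sd.
  apply: tlift_ext => c d; rewrite /Phi !tlift_t //; sd.
apply: tlift_ext => a b; rewrite /Phi tlift_t //; sd.
Qed.


Lemma counitR_gen (W : lmodType k) (G : H -> W) : klinear G -> forall h,
  tlift tHH (fun c d => eps d *: G c) (D h) = G h.
Proof.
move=> HG h; have E := proj2 (Hcounit h).
rewrite -[in RHS]E (tlift_comp (L:=G)); sd.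
by apply: tlift_ext => a b; rewrite klinZ.
Qed.

Lemma counitL_gen (W : lmodType k) (G : H -> W) : klinear G -> forall h,
  tlift tHH (fun c d => eps c *: G d) (D h) = G h.
Proof.
move=> HG h; have E := proj1 (Hcounit h).
rewrite -[in RHS]E (tlift_comp (L:=G)); sd.
by apply: tlift_ext => a b; rewrite klinZ.
Qed.

Lemma antiL_gen (W : lmodType k) (L : H -> W) : klinear L -> forall h,
  tlift tHH (fun a b => L (sig a * b)) (D h) = eps h *: L 1.
Proof.
move=> HL h; rewrite -(tlift_comp (L:=L) (f:=fun a b => sig a * b)); sd.
by rewrite (proj1 (Hanti h)) klinZ.
Qed.

Lemma antiR_gen (W : lmodType k) (L : H -> W) : klinear L -> forall h,
  tlift tHH (fun a b => L (a * sig b)) (D h) = eps h *: L 1.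
Proof.
move=> HL h; rewrite -(tlift_comp (L:=L) (f:=fun a b => a * sig b)); sd.
by rewrite (proj2 (Hanti h)) klinZ.
Qed.

Lemma Dmul_gen (W : lmodType k) (G : H -> H -> W) : kbilinear G -> forall x y,
  tlift tHH G (D (x * y))
  = tlift tHH (fun a b => tlift tHH (fun c d => G (a * c) (b * d)) (D y)) (D x).
Proof.
move=> HG x y; rewrite HDmul /tmul (tlift_comp (L:=tlift tHH G)); sd.
apply: tlift_ext => a b; rewrite (tlift_comp (L:=tlift tHH G)); sd.
by apply: tlift_ext => c d; rewrite tlift_t //; sd.
Qed.


Lemma sigM_aux1 x y :
  tlift tHH (fun a b => tlift tHH (fun c d => tlift tHH (fun p q =>
     tlift tHH (fun r s => sig (a*c) * (p*r) * sig s * sig q) (D d)) (D b)) (D y)) (D x)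
  = sig (x * y).
Proof.
transitivity (tlift tHH (fun a b => tlift tHH (fun c d => eps d *:
     tlift tHH (fun p q => sig (a*c) * p * sig q) (D b)) (D y)) (D x)).
  apply: tlift_ext => a b; apply: tlift_ext => c d.
  rewrite [RHS](tlift_comp (L:=GRing.scale (eps d))); sd.
  apply: tlift_ext => p q.
  transitivity (tlift tHH (fun r s => (fun z => sig (a*c) * p * z * sig q) (r * sig s)) (D d)).
    by apply: tlift_ext => r s /=; rewrite !mulrA.
  by rewrite (antiR_gen (L := fun z => sig (a*c) * p * z * sig q)) ?mulr1; sd.
transitivity (tlift tHH (fun a b => tlift tHH (fun p q => sig (a*y) * p * sig q) (D b)) (D x)).
  apply: tlift_ext => a b.
  by rewrite (counitR_gen (G := fun c => tlift tHH (fun p q => sig (a*c) * p * sig q) (D b))); sd.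
transitivity (tlift tHH (fun a b => eps b *: sig (a * y)) (D x)).
  apply: tlift_ext => a b.
  transitivity (tlift tHH (fun p q => (fun z => sig (a*y) * z) (p * sig q)) (D b)).
    by apply: tlift_ext => r s /=; rewrite !mulrA.
  by rewrite (antiR_gen (L := fun z => sig (a*y) * z)) ?mulr1; sd.
by rewrite (counitR_gen (G := fun a => sig (a * y))); sd.
Qed.


Lemma sigM_aux2 x y :
  tlift tHH (fun a b => tlift tHH (fun c d => tlift tHH (fun p q =>
     tlift tHH (fun r s => sig (a*c) * (p*r) * sig s * sig q) (D d)) (D b)) (D y)) (D x)
  = sig y * sig x.
Proof.
transitivity (tlift tHH (fun a b => tlift tHH (fun p q => tlift tHH (fun c d =>
     tlift tHH (fun r s => sig (a*c) * (p*r) * sig s * sig q) (D d)) (D y)) (D b)) (D x)).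
  apply: tlift_ext => a b.
  by rewrite (tlift_fubini (F := fun c d p q =>
     tlift tHH (fun r s => sig (a*c) * (p*r) * sig s * sig q) (D d))); sd.
transitivity (tlift tHH (fun a b => tlift tHH (fun a1 a2 => tlift tHH (fun c d =>
     tlift tHH (fun r s => sig (a1*c) * (a2*r) * sig s * sig b) (D d)) (D y)) (D a)) (D x)).
  by rewrite -(coassH_gen (f := fun a p q => tlift tHH (fun c d =>
     tlift tHH (fun r s => sig (a*c) * (p*r) * sig s * sig q) (D d)) (D y))); sd.
transitivity (tlift tHH (fun a b => tlift tHH (fun a1 a2 => tlift tHH (fun c d =>
     tlift tHH (fun c1 c2 => sig (a1*c1) * (a2*c2) * sig d * sig b) (D c)) (D y)) (D a)) (D x)).
  apply: tlift_ext => a b; apply: tlift_ext => a1 a2.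
  by rewrite -(coassH_gen (f := fun c r s => sig (a1*c) * (a2*r) * sig s * sig b)); sd.
transitivity (tlift tHH (fun a b => tlift tHH (fun c d => tlift tHH (fun a1 a2 =>
     tlift tHH (fun c1 c2 => sig (a1*c1) * (a2*c2) * sig d * sig b) (D c)) (D a)) (D y)) (D x)).
  apply: tlift_ext => a b.
  by rewrite (tlift_fubini (F := fun a1 a2 c d =>
     tlift tHH (fun c1 c2 => sig (a1*c1) * (a2*c2) * sig d * sig b) (D c))); sd.
transitivity (tlift tHH (fun a b => tlift tHH (fun c d => eps c *: (eps a *: (sig d * sig b))) (D y)) (D x)).
  apply: tlift_ext => a b; apply: tlift_ext => c d.
  rewrite -(Dmul_gen (G := fun p q => sig p * q * sig d * sig b)); sd.
  transitivity (tlift tHH (fun p q => (fun z => z * sig d * sig b) (sig p * q)) (D (a * c))).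
    by apply: tlift_ext => p q /=.
  by rewrite (antiL_gen (L := fun z => z * sig d * sig b)) ?mul1r ?HepsM ?scalerA ?(mulrC (eps c)); sd.
transitivity (tlift tHH (fun a b => eps a *: (sig y * sig b)) (D x)).
  apply: tlift_ext => a b.
  by rewrite (counitL_gen (G := fun d => eps a *: (sig d * sig b))) ?scalerAl; sd.
by rewrite (counitL_gen (G := fun b => sig y * sig b)); sd.
Qed.

Lemma sigM x y : sig (x * y) = sig y * sig x.
Proof. by rewrite -sigM_aux1 sigM_aux2. Qed.

End Hopf.

Section Main.
Variable k : comNzRingType.
Variables (H : algType k) (HH HHH : lmodType k)
  (tHH : H -> H -> HH) (tHHH : H -> HH -> HHH)
  (D : H -> HH) (eps : H -> k) (sig : H -> H).
Variables (S : algType k) (SH SHH : lmodType k)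
  (tSH : S -> H -> SH) (tSHH : S -> HH -> SHH) (DS : S -> SH)
  (M : lmodType k) (act : M -> S -> M) (MH MHH : lmodType k)
  (tMH : M -> H -> MH) (tMHH : M -> HH -> MHH) (DM : M -> MH)
  (E : lmodType k) (iota : E -> M -> M) (EH EHH : lmodType k)
  (tEH : E -> H -> EH) (tEHH : E -> HH -> EHH).
Hypothesis Hhopf : is_hopf tHH tHHH D eps sig.
Hypothesis Hcom : is_comodule_algebra tHH D eps tSH tSHH DS.
Hypothesis Hmod : is_hopf_module tHH D eps tSH DS act tMH tMHH DM.
Hypothesis HEnd : is_EndS act iota.
Hypothesis HtEH : is_tensor tEH.
Hypothesis HtEHH : is_tensor tEHH.

Let HtHH : is_tensor tHH. Proof. by case: Hhopf. Qed.
Let HtHHH : is_tensor tHHH. Proof. by case: Hhopf => _ []. Qed.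
Let HtHHb : kbilinear tHH. Proof. exact: tensor_bil. Qed.
Let HtHHHb : kbilinear tHHH. Proof. exact: tensor_bil. Qed.
Let HD : klinear D. Proof. by case: Hhopf => _ [_ []]. Qed.
Let Hsig : klinear sig. Proof. by case: Hhopf => _ [_ [_ []]]. Qed.
Let Heps : forall (a : k) x y, eps (a *: x + y) = a * eps x + eps y.
Proof. by case: Hhopf => _ [_ [_ [_ []]]]. Qed.

Let HtSH : is_tensor tSH. Proof. by case: Hcom. Qed.
Let HtSHH : is_tensor tSHH. Proof. by case: Hcom => _ []. Qed.
Let HtSHb : kbilinear tSH. Proof. exact: tensor_bil. Qed.
Let HtSHHb : kbilinear tSHH. Proof. exact: tensor_bil. Qed.
Let HDS : klinear DS. Proof. by case: Hcom => _ [_ []]. Qed.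
Let HcoassS : forall x, tlift tSH (fun s h => tlift tSH (fun s' g => tSHH s' (tHH g h)) (DS s)) (DS x)
                 = tlift tSH (fun s h => tSHH s (D h)) (DS x).
Proof. by case: Hcom => _ [_ [_ []]]. Qed.
Let HcounitS : forall x, tlift tSH (fun s h => eps h *: s) (DS x) = x.
Proof. by case: Hcom => _ [_ [_ [_ []]]]. Qed.

Let Hact : kbilinear act. Proof. by case: Hmod => [[]]. Qed.
Let HtMH : is_tensor tMH. Proof. by case: Hmod => _ []. Qed.
Let HtMHH : is_tensor tMHH. Proof. by case: Hmod => _ [_ []]. Qed.
Let HtMHb : kbilinear tMH. Proof. exact: tensor_bil. Qed.
Let HtMHHb : kbilinear tMHH. Proof. exact: tensor_bil. Qed.
Let HDM : klinear DM. Proof. by case: Hmod => _ [_ [_ []]]. Qed.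
Let HDMact : forall m s, DM (act m s)
        = tlift tMH (fun n h => tlift tSH (fun s' g => tMH (act n s') (h * g)) (DS s)) (DM m).
Proof. by case: Hmod => _ [_ [_ [_ [_ [_ ]]]]]. Qed.

Let HtEHb : kbilinear tEH. Proof. exact: tensor_bil. Qed.
Let HtEHHb : kbilinear tEHH. Proof. exact: tensor_bil. Qed.
Let Hiota_e : forall (a : k) e e' m, iota (a *: e + e') m = a *: iota e m + iota e' m.
Proof. by case: HEnd. Qed.
Let Hiota_S : forall e, Slinear act act (iota e). Proof. by case: HEnd => _ []. Qed.
Let Hiota_inj : forall e e', (forall m, iota e m = iota e' m) -> e = e'.
Proof. by case: HEnd => _ [_ []]. Qed.
Let Hiota_surj : forall phi, Slinear act act phi -> exists e, forall m, iota e m = phi m.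
Proof. by case: HEnd => _ [_ [_ ]]. Qed.
Let Hiotab : kbilinear iota.
Proof. split=> [m|e] a u v; first exact: Hiota_e. by case: (Hiota_S e). Qed.

Lemma coassS_gen (W : lmodType k) (f : S -> H -> H -> W) :
  (forall b c, klinear (fun a => f a b c)) -> (forall a c, klinear (fun b => f a b c)) ->
  (forall a b, klinear (f a b)) -> forall x,
  tlift tSH (fun s h => tlift tSH (fun s' g => f s' g h) (DS s)) (DS x)
  = tlift tSH (fun s h => tlift tHH (fun g1 g2 => f s g1 g2) (D h)) (DS x).
Proof.
move=> H1 H2 H3 x.
pose Phi := tlift tSHH (fun s hh => tlift tHH (fun b c => f s b c) hh).
have HPhi : klinear Phi by rewrite /Phi; linL.
have := congr1 Phi (HcoassS x).
rewrite !(tlift_comp (L:=Phi)); sd.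
move=> E0; apply: etrans (etrans _ E0) _.
  apply: tlift_ext => a b; rewrite (tlift_comp (L:=Phi)); sd.
  apply: tlift_ext => c d; rewrite /Phi !tlift_t //; sd.
apply: tlift_ext => a b; rewrite /Phi tlift_t //; sd.
Qed.

Lemma counitS_gen (W : lmodType k) (G : S -> W) : klinear G -> forall x,
  tlift tSH (fun s h => eps h *: G s) (DS x) = G x.
Proof.
move=> HG x; have E0 := HcounitS x.
rewrite -[in RHS]E0 (tlift_comp (L:=G)); sd.
by apply: tlift_ext => a b; rewrite klinZ.
Qed.


Lemma b00_inner n1 h1 h s :
  tlift tSH (fun s' g => tlift tSH (fun s'' g'' =>
     tMH (act n1 s'') (h1 * g'' * (sig g * sig h))) (DS s')) (DS s)
  = tMH (act n1 s) (h1 * sig h).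
Proof.
rewrite (coassS_gen (f := fun s'' g'' g => tMH (act n1 s'') (h1 * g'' * (sig g * sig h)))); sd.
transitivity (tlift tSH (fun s' g => eps g *: tMH (act n1 s') (h1 * sig h)) (DS s)).
  apply: tlift_ext => s' g.
  transitivity (tlift tHH (fun g1 g2 => (fun z => tMH (act n1 s') (h1 * z * sig h)) (g1 * sig g2)) (D g)).
    by apply: tlift_ext => g1 g2 /=; rewrite !mulrA.
  by rewrite (antiR_gen Hhopf (L := fun z => tMH (act n1 s') (h1 * z * sig h))) ?mulr1; sd.
by rewrite (counitS_gen (G := fun s' => tMH (act n1 s') (h1 * sig h))); sd.
Qed.

Lemma b00_W1 phi : Slinear act act phi -> Slinear act (tact act tMH) (b0_0 tMH DM sig phi).
Proof.
move=> [Hphi HphiS]; split; first by rewrite /b0_0; lin.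
move=> m s; rewrite /b0_0 /tact HDMact.
transitivity (tlift tMH (fun n h => tlift tSH (fun s' g => tlift tMH (fun n1 h1 =>
   tlift tSH (fun s'' g'' => tMH (act n1 s'') (h1 * g'' * sig (h * g))) (DS s')) (DM (phi n))) (DS s)) (DM m)).
  rewrite (tlift_comp (L := tlift tMH (fun m0 m1 => tlift tMH (fun n g => tMH n (g * sig m1)) (DM (phi m0))))); sd.
  apply: tlift_ext => n h.
  rewrite (tlift_comp (L := tlift tMH (fun m0 m1 => tlift tMH (fun n g => tMH n (g * sig m1)) (DM (phi m0))))); sd.
  apply: tlift_ext => s' g; rewrite tlift_t; sd.
  rewrite HphiS HDMact (tlift_comp (L := tlift tMH (fun n g0 => tMH n (g0 * sig (h * g))))); sd.
  apply: tlift_ext => n1 h1.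
  rewrite (tlift_comp (L := tlift tMH (fun n g0 => tMH n (g0 * sig (h * g))))); sd.
  by apply: tlift_ext => s'' g''; rewrite tlift_t //; sd.
transitivity (tlift tMH (fun n h => tlift tMH (fun n1 h1 => tlift tSH (fun s' g =>
   tlift tSH (fun s'' g'' => tMH (act n1 s'') (h1 * g'' * (sig g * sig h))) (DS s')) (DS s)) (DM (phi n))) (DM m)).
  apply: tlift_ext => n h.
  rewrite (tlift_fubini (F := fun s' g n1 h1 =>
   tlift tSH (fun s'' g'' => tMH (act n1 s'') (h1 * g'' * sig (h * g))) (DS s'))); sd.
  apply: tlift_ext => n1 h1; apply: tlift_ext => s' g; apply: tlift_ext => s'' g''.
  by rewrite (sigM Hhopf).
rewrite (tlift_comp (L := tlift tMH (fun m x => tMH (act m s) x))); sd.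
apply: tlift_ext => n h; rewrite (tlift_comp (L := tlift tMH (fun m x => tMH (act m s) x))); sd.
apply: tlift_ext => n1 h1; rewrite b00_inner tlift_t //; sd.
Qed.


Lemma mulE_spec e e' m : iota (mulE iota e e') m = iota e (iota e' m).
Proof.
move: m; rewrite /mulE; apply epsilon_spec; apply: Hiota_surj; split; first by lin.
by move=> m0 s; case: (Hiota_S e') => _ ->; case: (Hiota_S e) => _ ->.
Qed.

Lemma oneE_spec m : iota (oneE iota) m = m.
Proof.
move: m; rewrite /oneE; apply epsilon_spec; apply: Hiota_surj; split; first by lin.
by [].
Qed.

Lemma mulE_bil : kbilinear (mulE iota).
Proof.
split=> [e'|e] a u v; apply: Hiota_inj => m; rewrite Hiota_e !mulE_spec.
  exact: Hiota_e.
by rewrite Hiota_e; case: (Hiota_S e) => -> _.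
Qed.

Lemma b00_add phi psi a m : klinear phi -> klinear psi ->
  b0_0 tMH DM sig (fun m => a *: phi m + psi m) m
  = a *: b0_0 tMH DM sig phi m + b0_0 tMH DM sig psi m.
Proof.
move=> Hphi Hpsi; rewrite /b0_0 -tlift_linfun; sd.
apply: tlift_ext => m0 m1; rewrite HDM.
have Hl : klinear (tlift tMH (fun n g => tMH n (g * sig m1))) by linL.
by rewrite Hl.
Qed.

Section Iso.
Variables (X EX MX : lmodType k) (tEX : E -> X -> EX) (tMX : M -> X -> MX)
  (mulX : X -> X -> X) (oneX : X).
Hypotheses (HtEX : is_tensor tEX) (HtMX : is_tensor tMX) (HmulX : kbilinear mulX)
  (HF : condF act iota tEX tMX).
Let HtEXb : kbilinear tEX. Proof. exact: tensor_bil. Qed.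
Let HtMXb : kbilinear tMX. Proof. exact: tensor_bil. Qed.
Let HmEb : kbilinear (mulE iota). Proof. exact: mulE_bil. Qed.

Lemma om_W Y : Slinear act (tact act tMX) (omega iota tEX tMX Y).
Proof.
rewrite /omega; split; first by lin.
move=> m s; rewrite /tact (tlift_comp (L := tlift tMX (fun m0 x => tMX (act m0 s) x))); sd.
apply: tlift_ext => e x; rewrite tlift_t; sd.
by case: (Hiota_S e) => _ ->.
Qed.

Lemma om_mul Y Z m : omega iota tEX tMX (tmul tEX (mulE iota) mulX Y Z) m
  = wmul tMX mulX (omega iota tEX tMX Y) (omega iota tEX tMX Z) m.
Proof.
rewrite /omega /wmul /tmul.
transitivity (tlift tEX (fun a b => tlift tEX (fun c d => tMX (iota a (iota c m)) (mulX b d)) Z) Y).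
  rewrite (tlift_comp (L := tlift tEX (fun e x => tMX (iota e m) x))); sd.
  apply: tlift_ext => a b.
  rewrite (tlift_comp (L := tlift tEX (fun e x => tMX (iota e m) x))); sd.
  by apply: tlift_ext => c d; rewrite tlift_t ?mulE_spec //; sd.
rewrite (tlift_comp (L := tlift tMX (fun m' a => tlift tMX (fun m'' b => tMX m'' (mulX b a))
          (tlift tEX (fun e x => tMX (iota e m') x) Y)))); sd.
transitivity (tlift tEX (fun c d => tlift tEX (fun a b => tMX (iota a (iota c m)) (mulX b d)) Y) Z).
  by rewrite (tlift_fubini (F := fun a b c d => tMX (iota a (iota c m)) (mulX b d))); sd.
apply: tlift_ext => c d; rewrite tlift_t; sd.
rewrite (tlift_comp (L := tlift tMX (fun m'' b => tMX m'' (mulX b d)))); sd.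
by apply: tlift_ext => a b; rewrite tlift_t //; sd.
Qed.

Lemma om_one m : omega iota tEX tMX (tEX (oneE iota) oneX) m = tMX m oneX.
Proof. by rewrite /omega tlift_t ?oneE_spec //; sd. Qed.

Lemma iso_gen : unit_group_iso (tmul tEX (mulE iota) mulX) (tEX (oneE iota) oneX)
  (Slinear act (tact act tMX)) (wmul tMX mulX) (fun m => tMX m oneX) (omega iota tEX tMX).
Proof.
split; [|split; [|split]].
- move=> x [y [Hxy Hyx]]; split; first exact: om_W.
  exists (omega iota tEX tMX y); split; first exact: om_W.
  by split=> m; rewrite -om_mul ?Hxy ?Hyx om_one.
- by move=> x y _ _ m; rewrite om_mul.
- by move=> x y _ _; case: HF => Hi _; apply: Hi.
- move=> phi [Wphi [psi [Wpsi [H1 H2]]]].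
  case: HF => Hi Hs.
  have [x Hx] := Hs _ Wphi; have [y Hy] := Hs _ Wpsi.
  have ex : omega iota tEX tMX x = phi by apply: functional_extensionality.
  have ey : omega iota tEX tMX y = psi by apply: functional_extensionality.
  exists x; split=> //; exists y; split; apply: Hi => m.
    by rewrite om_mul ex ey H1 om_one.
  by rewrite om_mul ex ey H2 om_one.
Qed.
End Iso.


Lemma iso0 : unit_group_iso (mulE iota) (oneE iota) (Slinear act act)
  (fun (phi psi : M -> M) (m : M) => phi (psi m)) (fun m : M => m) iota.
Proof.
split; [|split; [|split]].
- move=> x [y [Hxy Hyx]]; split; first exact: Hiota_S.
  exists (iota y); split; first exact: Hiota_S.
  by split=> m; rewrite -mulE_spec ?Hxy ?Hyx oneE_spec.
- by move=> x y _ _ m; rewrite mulE_spec.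
- by move=> x y _ _; apply: Hiota_inj.
- move=> phi [Wphi [psi [Wpsi [H1 H2]]]].
  have [x Hx] := Hiota_surj Wphi; have [y Hy] := Hiota_surj Wpsi.
  exists x; split=> //; exists y; split; apply: Hiota_inj => m.
    by rewrite mulE_spec Hy Hx H1 oneE_spec.
  by rewrite mulE_spec Hx Hy H2 oneE_spec.
Qed.

Section WithF1.
Hypothesis HF1 : condF act iota tEH tMH.

Lemma DE_spec e m : omega iota tEH tMH (DeltaE iota tEH tMH DM sig e) m
  = b0_0 tMH DM sig (iota e) m.
Proof.
move: m; rewrite /DeltaE; apply epsilon_spec; case: HF1 => _ Hs; apply: Hs.
apply: b00_W1; exact: Hiota_S.
Qed.

Lemma DE_lin : klinear (DeltaE iota tEH tMH DM sig).
Proof.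
move=> a e e'; case: HF1 => Hi _; apply: Hi => m.
have Hl : klinear (tlift tEH (fun e x => tMH (iota e m) x)) by linL.
have E1 := DE_spec e m; have E2 := DE_spec e' m; have E3 := DE_spec (a *: e + e') m.
rewrite /omega in E1 E2 E3 *; rewrite E3 Hl E1 E2.
have -> : iota (a *: e + e') = (fun m => a *: iota e m + iota e' m).
  by apply: functional_extensionality => m0; apply: Hiota_e.
by apply: b00_add; [case: (Hiota_S e) | case: (Hiota_S e')].
Qed.

Let HDEl := DE_lin.

Lemma cof_d01 X m :
  omega iota tEHH tMHH (d0_1 tHH tEH tEHH (DeltaE iota tEH tMH DM sig) X) m
  = b0_1 tHH tMH tMHH DM sig (omega iota tEH tMH X) m.
Proof.
transitivity (tlift tEH (fun e h => tlift tMH (fun m0 m1 => tlift tMH (fun n g =>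
     tMHH n (tHH (g * sig m1) h)) (DM (iota e m0))) (DM m)) X).
  rewrite /omega /d0_1 (tlift_comp (L := tlift tEHH (fun e x => tMHH (iota e m) x))); sd.
  apply: tlift_ext => e h.
  rewrite (tlift_comp (L := tlift tEHH (fun e x => tMHH (iota e m) x))); sd.
  transitivity (tlift tMH (fun n g => tMHH n (tHH g h)) (omega iota tEH tMH (DeltaE iota tEH tMH DM sig e) m)).
    rewrite /omega (tlift_comp (L := tlift tMH (fun n g => tMHH n (tHH g h)))); sd.
    by apply: tlift_ext => e0 e1; rewrite !tlift_t //; sd.
  rewrite DE_spec /b0_0 (tlift_comp (L := tlift tMH (fun n g => tMHH n (tHH g h)))); sd.
  apply: tlift_ext => m0 m1.
  rewrite (tlift_comp (L := tlift tMH (fun n g => tMHH n (tHH g h)))); sd.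
  by apply: tlift_ext => n g; rewrite !tlift_t //; sd.
rewrite /b0_1 /omega.
transitivity (tlift tMH (fun m0 m1 => tlift tEH (fun e h => tlift tMH (fun n g =>
     tMHH n (tHH (g * sig m1) h)) (DM (iota e m0))) X) (DM m)).
  by rewrite (tlift_fubini (F := fun e h m0 m1 => tlift tMH (fun n g =>
     tMHH n (tHH (g * sig m1) h)) (DM (iota e m0)))); sd.
apply: tlift_ext => m0 m1.
rewrite (tlift_comp (L := tlift tMH (fun m' h => tlift tMH (fun n g =>
     tMHH n (tHH (g * sig m1) h)) (DM m')))); sd.
by apply: tlift_ext => e h; rewrite tlift_t //; sd.
Qed.

End WithF1.

Lemma cof_d11 X m :
  omega iota tEHH tMHH (d1_1 tEH tEHH D X) m = b1_1 tMH tMHH D (omega iota tEH tMH X) m.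
Proof.
rewrite /omega /d1_1 /b1_1 (tlift_comp (L := tlift tEHH (fun e x => tMHH (iota e m) x))); sd.
rewrite (tlift_comp (L := tlift tMH (fun n h => tMHH n (D h)))); sd.
by apply: tlift_ext => e h; rewrite !tlift_t //; sd.
Qed.

Lemma cof_d21 X m :
  omega iota tEHH tMHH (d2_1 tHH tEH tEHH X) m = b2_1 tHH tMH tMHH (omega iota tEH tMH X) m.
Proof.
rewrite /omega /d2_1 /b2_1 (tlift_comp (L := tlift tEHH (fun e x => tMHH (iota e m) x))); sd.
rewrite (tlift_comp (L := tlift tMH (fun n h => tMHH n (tHH h 1)))); sd.
by apply: tlift_ext => e h; rewrite !tlift_t //; sd.
Qed.

Lemma cof_d10 x m : omega iota tEH tMH (d1_0 tEH x) m = b1_0 tMH (iota x) m.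
Proof. by rewrite /omega /d1_0 /b1_0 tlift_t //; sd. Qed.

End Main.
Theorem proposition2p5
  (k : comNzRingType)
  (* the Hopf algebra H, with HH = H(x)H, HHH = H(x)H(x)H *)
  (H : algType k) (HH HHH : lmodType k)
  (tHH : H -> H -> HH) (tHHH : H -> HH -> HHH)
  (D : H -> HH) (eps : H -> k) (sig : H -> H)
  (* the H-comodule algebra S, with SH = S(x)H, SHH = S(x)H(x)H *)
  (S : algType k) (SH SHH : lmodType k)
  (tSH : S -> H -> SH) (tSHH : S -> HH -> SHH) (DS : S -> SH)
  (* the (H,S)-Hopf module M, with MH = M(x)H, MHH = M(x)H(x)H *)
  (M : lmodType k) (act : M -> S -> M) (MH MHH : lmodType k)
  (tMH : M -> H -> MH) (tMHH : M -> HH -> MHH) (DM : M -> MH)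
  (* E = End_S(M), with EH = E(x)H, EHH = E(x)H(x)H *)
  (E : lmodType k) (iota : E -> M -> M) (EH EHH : lmodType k)
  (tEH : E -> H -> EH) (tEHH : E -> HH -> EHH) :
  is_hopf tHH tHHH D eps sig ->
  is_comodule_algebra tHH D eps tSH tSHH DS ->
  is_hopf_module tHH D eps tSH DS act tMH tMHH DM ->
  is_EndS act iota ->                 (* this is also Condition (F_0) *)
  is_tensor tEH -> is_tensor tEHH ->
  condF act iota tEH tMH ->           (* Condition (F_1) *)
  condF act iota tEHH tMHH ->         (* Condition (F_2) *)
  let DE := DeltaE iota tEH tMH DM sig in
  let mE := mulE iota in
  let oE := oneE iota in
  let mEH := tmul tEH mE *%R in
  let oEH := tEH oE 1 in
  let mEHH := tmul tEHH mE (tmul tHH *%R *%R) in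
  let oEHH := tEHH oE (tHH 1 1) in
  let W0 := Slinear act act in
  let W1 := Slinear act (tact act tMH) in
  let W2 := Slinear act (tact act tMHH) in
  let mW0 := fun (phi psi : M -> M) (m : M) => phi (psi m) in
  let mW1 := wmul tMH *%R in
  let mW2 := wmul tMHH (tmul tHH *%R *%R) in
  let oW0 := fun m : M => m in
  let oW1 := fun m : M => tMH m 1 in
  let oW2 := fun m : M => tMHH m (tHH 1 1) in
  let om1 := omega iota tEH tMH in
  let om2 := omega iota tEHH tMHH in
  (* omega_0, omega_1, omega_2 are isomorphisms of the unit groups *)
  unit_group_iso mE oE W0 mW0 oW0 iota /\
  unit_group_iso mEH oEH W1 mW1 oW1 om1 /\
  unit_group_iso mEHH oEHH W2 mW2 oW2 om2 /\
  (* and they commute with the cofaces: omega_j d^i = b^i omega_(j-1) *)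
  (forall x, is_unit mE oE x -> forall m,
     om1 (DE x) m = b0_0 tMH DM sig (iota x) m /\
     om1 (d1_0 tEH x) m = b1_0 tMH (iota x) m) /\
  (forall X, is_unit mEH oEH X -> forall m,
     om2 (d0_1 tHH tEH tEHH DE X) m = b0_1 tHH tMH tMHH DM sig (om1 X) m /\
     om2 (d1_1 tEH tEHH D X) m = b1_1 tMH tMHH D (om1 X) m /\
     om2 (d2_1 tHH tEH tEHH X) m = b2_1 tHH tMH tMHH (om1 X) m).
Proof.
move=> Hh Hc Hm HE HtEH HtEHH HF1 HF2; cbv zeta.
have HtHH : is_tensor tHH by case: Hh.
split; first by apply: iso0; eassumption.
split.
  apply: iso_gen; try eassumption; try exact: mul_bil; by case: Hm => _ [].
split.
  apply: iso_gen; try eassumption; try (by case: Hm => _ [_ []]).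
  apply: tmul_bil => //; apply: mul_bil.
split.
  move=> x _ m; split; first by apply: DE_spec; eassumption.
  by apply: cof_d10; eassumption.
move=> X _ m; split; first by apply: cof_d01; eassumption.
split; first by apply: cof_d11; eassumption.
by apply: cof_d21; eassumption.
Qed.
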